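(* Let $Q_1(\cdot\mid X)$ and $Q_2(\cdot\mid X)$ be conditional CDFs and define $Z_{Q_j}:=Q_j^{-1}(\Pi(Z\mid X)\mid X)$ for $j\in\{1,2\}$. Under monotonicity (for all $z'>z$, $A^{z'}\ge A^z$ with probability 1): if $Q_1$ stochastically dominates $Q_2$ (i.e. $Q_1(z\mid X)\le Q_2(z\mid X)$ for all $z$), then $\mathbb{P}[A^{Z_{Q_1}}\ge A^{Z_{Q_2}}]=1$; and if $Q_1$ is stochastically dominated by $Q_2$, then $\mathbb{P}[A^{Z_{Q_1}}\le A^{Z_{Q_2}}]=1$.
   Context: Covariates $X$, continuous instrument $Z\in\mathbb{R}$ with conditional CDF $\Pi(z\mid X)=P(Z\le z\mid X)$, binary treatment $A$. $A^z$ is the potential treatment had the instrument been set to $z$; for a random value $W$, $A^W$ is $A^z$ evaluated at $z=W$. $Q^{-1}(p\mid X)=\inf\{z:Q(z\mid X)\ge p\}$. *)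

(* Defs.v *)
From HB Require Import structures.
From mathcomp Require Import all_boot all_order all_algebra.
From mathcomp Require Import all_classical all_reals all_analysis.
Set Implicit Arguments. Unset Strict Implicit. Unset Printing Implicit Defensive.
Import Order.TTheory GRing.Theory Num.Theory.
Import numFieldNormedType.Exports.
Local Open Scope classical_set_scope.
Local Open Scope ring_scope.

Definition is_cdf {R : realType} (F : R -> R) : Prop :=
  [/\ {homo F : x y / x <= y},
      (forall x, F y @[y --> x^'+] --> F x),
      F x @[x --> -oo] --> (0 : R) &
      F x @[x --> +oo] --> (1 : R)].

Definition is_cond_cdf {R : realType} {TX : Type} (Q : R -> TX -> R) : Prop :=
  forall x, is_cdf (fun z => Q z x).

Definition qinv {R : realType} {TX : Type} (Q : R -> TX -> R) (p : R) (x : TX) : R :=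
  inf [set z : R | p <= Q z x].

Definition ZQ {R : realType} {TX T : Type} (Q Pi : R -> TX -> R)
  (X : T -> TX) (Z : T -> R) (w : T) : R :=
  qinv Q (Pi (Z w) (X w)) (X w).

(* Main.v *)
Require Import Defs.
From HB Require Import structures.
From mathcomp Require Import all_boot all_order all_algebra.
From mathcomp Require Import all_classical all_reals all_analysis.
Import Order.TTheory GRing.Theory Num.Theory.
Local Open Scope classical_set_scope.
Local Open Scope ring_scope.


Lemma inf_mono (R : realType) (F1 F2 : R -> R) (p : R) :
  is_cdf F1 -> is_cdf F2 -> 0 < p < 1 -> (forall z, F1 z <= F2 z) ->
  inf [set z | p <= F2 z] <= inf [set z | p <= F1 z].
Proof.
move=> [_ _ _ F1p] [F2h _ F2m _] /andP[p0 p1] le12.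
have [z1 Hz1] := filter_ex (cvgr_gt _ F1p _ p1).
have [z0 Hz0] := filter_ex (cvgr_lt _ F2m _ p0).
have lb : lbound [set z | p <= F2 z] z0.
  move=> z /= pz; rewrite leNgt; apply/negP => zz0.
  have := F2h _ _ (ltW zz0); rewrite leNgt => /negP; apply.
  exact: lt_le_trans Hz0 pz.
apply: lb_le_inf; first by exists z1; exact: ltW.
move=> z /= pz; apply: (ge_inf (ex_intro _ z0 lb)) => /=.
exact: le_trans pz (le12 z).
Qed.

Lemma mono_step (R : realType) (a : R -> bool) (x y : R) :
  (forall z z' : R, z < z' -> (a z <= a z')%N) -> y <= x -> (a y <= a x)%N.
Proof.
move=> h; rewrite le_eqVlt => /orP[/eqP -> //|]; exact: h.
Qed.

Theorem proposition4 (R : realType) (d : measure_display) (T : measurableType d)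
  (P : probability T R) (TX : Type) (X : T -> TX) (Z : T -> R)
  (A : R -> T -> bool) (Pi Q1 Q2 : R -> TX -> R) :
  is_cond_cdf Pi -> is_cond_cdf Q1 -> is_cond_cdf Q2 ->
  {ae P, forall w, 0 < Pi (Z w) (X w) < 1} ->
  {ae P, forall w, forall z z' : R, z < z' -> (A z w <= A z' w)%N} ->
  ({ae P, forall w, forall z : R, Q1 z (X w) <= Q2 z (X w)} ->
     {ae P, forall w, (A (ZQ Q2 Pi X Z w) w <= A (ZQ Q1 Pi X Z w) w)%N})
  /\
  ({ae P, forall w, forall z : R, Q2 z (X w) <= Q1 z (X w)} ->
     {ae P, forall w, (A (ZQ Q1 Pi X Z w) w <= A (ZQ Q2 Pi X Z w) w)%N}).
Proof.
move=> _ hQ1 hQ2 hPi hA; split=> hle.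
- apply: filterS3 hPi hA hle => w hp ha hl.
  apply: mono_step ha _; exact: inf_mono (hQ1 (X w)) (hQ2 (X w)) hp hl.
- apply: filterS3 hPi hA hle => w hp ha hl.
  apply: mono_step ha _; exact: inf_mono (hQ2 (X w)) (hQ1 (X w)) hp hl.
Qed.
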